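(* Let $V, K$ be positive integers, let $\boldsymbol\epsilon \in [0,1]^V$, and let $R$ be a finite set of rays with $|R| \ge K$, each ray $j\in R$ having a vector $\mathbf p_j=(p_{ij})_{i=1}^V \in [0,1]^V$. Run the greedy algorithm on $R$ for $K$ iterations: set $\mathbf b^0=\boldsymbol\epsilon$ and $A_0=R$; at iteration $t=1,\dots,K$ choose $j_t \in \arg\min_{j\in A_{t-1}} \sum_{i} b^{t-1}_i p_{ij}$ (ties broken arbitrarily), set $\mathbf b^t = \mathbf b^{t-1}\odot \mathbf p_{j_t}$ (coordinatewise product) and $A_t = A_{t-1}\setminus\{j_t\}$. Let $f^t=\sum_{i=1}^V b^t_i$, $E=\sum_{i=1}^V \epsilon_i$, and $$\mathrm{OPT} = \min_{S\subseteq R,\ |S|=K}\ \sum_{i=1}^V \prod_{j\in S} p_{ij}.$$ Then $$f^K \le \frac{E}{e} + \mathrm{OPT}\Big(1-\frac{1}{e}\Big),$$ where $e$ is Euler's number.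
   Context: Here $\epsilon_i$ models the expected reconstruction loss in voxel $i$ and $p_{ij}$ the probability that voxel $i$ is not covered by ray $j$; this is the single-position case ($L=1$) of the ray-planning problem. *)

(* Defs.v *)
From Stdlib Require Import Reals List.
Open Scope R_scope.

(* Voxels are indexed 0..V-1, rays are indexed 0..N-1 (the ray set R, |R| = N).
   p i j = p_{ij}, eps i = epsilon_i. *)

Fixpoint rsum (n : nat) (f : nat -> R) : R :=
  match n with
  | O => 0
  | S m => rsum m f + f m
  end.

Definition prodl (p : nat -> nat -> R) (s : list nat) (i : nat) : R :=
  fold_right (fun j acc => p i j * acc) 1 s.

Definition setval (V : nat) (p : nat -> nat -> R) (s : list nat) : R :=
  rsum V (fun i => prodl p s i).

Definition admissible (N K : nat) (s : list nat) : Prop :=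
  NoDup s /\ length s = K /\ (forall j, In j s -> (j < N)%nat).

(* greedy state b^t (t = number of rays chosen so far, js = j_1,...,j_K) *)
Definition bstate (eps : nat -> R) (p : nat -> nat -> R) (js : list nat)
  (t : nat) (i : nat) : R :=
  eps i * prodl p (firstn t js) i.

Definition gcost (V : nat) (eps : nat -> R) (p : nat -> nat -> R) (js : list nat)
  (t j : nat) : R :=
  rsum V (fun i => bstate eps p js t i * p i j).

(* js is a possible run (any tie-breaking) of the greedy algorithm for K
   iterations: the (t+1)-th chosen ray nth t js lies in A_t = R \ {j_1..j_t}
   and minimises the cost over A_t. *)
Definition greedy_run (V N K : nat) (eps : nat -> R) (p : nat -> nat -> R)
  (js : list nat) : Prop :=
  length js = K /\
  forall t, (t < K)%nat ->
    (nth t js 0%nat < N)%nat /\ ~ In (nth t js 0%nat) (firstn t js) /\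
    forall j, (j < N)%nat -> ~ In j (firstn t js) ->
      gcost V eps p js t (nth t js 0%nat) <= gcost V eps p js t j.

(* Main.v *)
Require Import Defs.
From Stdlib Require Import Reals List Lra Lia.
Open Scope R_scope.

Lemma firstn_S_app (l : list nat) t : (t < length l)%nat ->
  firstn (S t) l = firstn t l ++ nth t l 0%nat :: nil.
Proof.
  revert t; induction l as [|a l IH]; intros t H; simpl in *; [lia|].
  destruct t; [reflexivity|]. simpl. rewrite (IH t) by lia. reflexivity.
Qed.

Lemma prodl_app p a b i : prodl p (a ++ b) i = prodl p a i * prodl p b i.
Proof. induction a; simpl; unfold prodl in *; simpl; [ring|]. rewrite IHa. ring. Qed.

Lemma prodl_cons p a b i : prodl p (a :: b) i = p i a * prodl p b i.
Proof. reflexivity. Qed.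

Lemma prodl_bounds p l i : (forall j, In j l -> 0 <= p i j <= 1) ->
  0 <= prodl p l i <= 1.
Proof.
  induction l as [|a l IH]; intros H; [unfold prodl; simpl; lra|].
  rewrite prodl_cons. assert (Ha := H a (or_introl eq_refl)).
  assert (IH' : 0 <= prodl p l i <= 1) by (apply IH; intros; apply H; right; auto).
  split; [nra|nra].
Qed.

Lemma rsum_plus n f g : rsum n (fun i => f i + g i) = rsum n f + rsum n g.
Proof. induction n; simpl; [ring|rewrite IHn; ring]. Qed.

Lemma rsum_minus n f g : rsum n (fun i => f i - g i) = rsum n f - rsum n g.
Proof. induction n; simpl; [ring|rewrite IHn; ring]. Qed.

Lemma rsum_le n f g : (forall i, (i < n)%nat -> f i <= g i) -> rsum n f <= rsum n g.
Proof.
  induction n; intros H; simpl; [lra|].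
  assert (rsum n f <= rsum n g) by (apply IHn; intros; apply H; lia).
  assert (f n <= g n) by (apply H; lia). lra.
Qed.

Lemma rsum_ext n f g : (forall i, (i < n)%nat -> f i = g i) -> rsum n f = rsum n g.
Proof.
  intros H; apply Rle_antisym; apply rsum_le; intros i Hi; rewrite H by lia; lra.
Qed.

Definition lsum (l : list nat) (g : nat -> R) : R :=
  fold_right (fun j acc => g j + acc) 0 l.

Lemma rsum_lsum n l h :
  rsum n (fun i => lsum l (fun j => h i j)) = lsum l (fun j => rsum n (fun i => h i j)).
Proof.
  induction l as [|a l IH]; simpl.
  - induction n; simpl; [ring|rewrite IHn; ring].
  - rewrite rsum_plus, IH. reflexivity.
Qed.

Lemma lsum_bound l g c : (forall j, In j l -> g j <= c) ->
  lsum l g <= INR (length l) * c.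
Proof.
  induction l as [|a l IH]; intros H; [simpl; lra|].
  cbn [length]; rewrite S_INR; cbn [lsum fold_right]; fold (lsum l g).
  assert (lsum l g <= INR (length l) * c) by (apply IH; intros; apply H; right; auto).
  assert (g a <= c) by (apply H; left; auto). lra.
Qed.

Lemma one_minus_prodl p l i : (forall j, In j l -> 0 <= p i j <= 1) ->
  1 - prodl p l i <= lsum l (fun j => 1 - p i j).
Proof.
  induction l as [|a l IH]; intros H; [unfold prodl; simpl; lra|].
  rewrite prodl_cons. simpl.
  assert (Ha := H a (or_introl eq_refl)).
  assert (Hb : forall j, In j l -> 0 <= p i j <= 1) by (intros; apply H; right; auto).
  assert (IH' := IH Hb). assert (B := prodl_bounds p l i Hb). nra.
Qed.

Lemma prodl_remove p U c i : NoDup U -> In c U ->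
  prodl p U i = p i c * prodl p (remove Nat.eq_dec c U) i.
Proof.
  induction U as [|u U IH]; intros ND Hin; [destruct Hin|].
  inversion ND; subst. simpl remove. destruct (Nat.eq_dec c u) as [->|ne].
  - rewrite notin_remove by auto. reflexivity.
  - rewrite !prodl_cons. destruct Hin as [->|Hin]; [congruence|].
    rewrite IH by auto. ring.
Qed.

Lemma NoDup_remove_c (U : list nat) c : NoDup U -> NoDup (remove Nat.eq_dec c U).
Proof.
  induction U as [|u U IH]; intros ND; simpl; [constructor|].
  inversion ND; subst. destruct (Nat.eq_dec c u); auto.
  constructor; auto. intros H. apply in_remove in H. tauto.
Qed.

Lemma prodl_incl p i U C : NoDup U -> incl U C ->
  (forall j, In j C -> 0 <= p i j <= 1) -> prodl p C i <= prodl p U i.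
Proof.
  revert U; induction C as [|c C IH]; intros U ND Hinc Hp.
  - destruct U as [|u U]; [unfold prodl; simpl; lra|].
    exfalso; apply (Hinc u); left; auto.
  - assert (Hc := Hp c (or_introl eq_refl)).
    assert (HpC : forall j, In j C -> 0 <= p i j <= 1) by (intros; apply Hp; right; auto).
    assert (BC := prodl_bounds p C i HpC).
    rewrite prodl_cons.
    destruct (in_dec Nat.eq_dec c U) as [Hin|Hnin].
    + rewrite (prodl_remove p U c i ND Hin).
      assert (prodl p C i <= prodl p (remove Nat.eq_dec c U) i).
      { apply IH.
        - apply NoDup_remove_c; auto.
        - intros x Hx. apply in_remove in Hx. destruct Hx as [Hx ne].
          destruct (Hinc x Hx) as [->|]; [congruence|auto].
        - auto. }
      nra.
    + assert (prodl p C i <= prodl p U i).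
      { apply IH; auto. intros x Hx. destruct (Hinc x Hx) as [->|]; [contradiction|auto]. }
      nra.
Qed.

Definition inC (C : list nat) (j : nat) : bool :=
  if in_dec Nat.eq_dec j C then true else false.

Lemma prodl_filter p f l i :
  prodl p l i = prodl p (filter f l) i * prodl p (filter (fun x => negb (f x)) l) i.
Proof.
  induction l as [|a l IH]; [unfold prodl; simpl; ring|].
  simpl filter. destruct (f a); simpl negb; rewrite !prodl_cons, IH; ring.
Qed.

Lemma lsum_scal l g c : c * lsum l g = lsum l (fun j => c * g j).
Proof. induction l; simpl; [ring|]. rewrite <- IHl. ring. Qed.

Lemma exp_pow x n : exp x ^ n = exp (INR n * x).
Proof.
  induction n; simpl pow. rewrite Rmult_0_l, exp_0; reflexivity.
  rewrite IHn, S_INR, <- exp_plus. f_equal. ring.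
Qed.

Theorem theorem1 (V K N : nat) (eps : nat -> R) (p : nat -> nat -> R)
  (js : list nat) (OPT : R) :
  (0 < V)%nat -> (0 < K)%nat -> (K <= N)%nat ->
  (forall i, (i < V)%nat -> 0 <= eps i <= 1) ->
  (forall i j, (i < V)%nat -> (j < N)%nat -> 0 <= p i j <= 1) ->
  greedy_run V N K eps p js ->
  (* OPT is the minimum of setval over subsets S of R with |S| = K *)
  (exists S, admissible N K S /\ setval V p S = OPT) ->
  (forall S, admissible N K S -> OPT <= setval V p S) ->
  rsum V (fun i => bstate eps p js K i)
    <= rsum V eps / exp 1 + OPT * (1 - 1 / exp 1).
Proof.
  intros HV HK HKN Heps Hp [Hlen Hgr] [S0 [[SND [Slen Sin]] SOPT]] _.
  set (F := fun t => rsum V (fun i => bstate eps p js t i)).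
  change (F K <= rsum V eps / exp 1 + OPT * (1 - 1 / exp 1)).
  assert (Hjs : forall j, In j js -> (j < N)%nat).
  { intros j Hj. destruct (In_nth js j 0%nat Hj) as [n [Hn <-]].
    apply (Hgr n). lia. }
  assert (HC : forall t i, (i < V)%nat -> forall j, In j (firstn t js) -> 0 <= p i j <= 1).
  { intros t i Hi j Hj. apply Hp; auto. apply Hjs. rewrite <- (firstn_skipn t js). apply in_or_app; left; auto. }
  assert (Hb : forall t i, (i < V)%nat -> 0 <= bstate eps p js t i <= eps i).
  { intros t i Hi. unfold bstate. pose proof (prodl_bounds p (firstn t js) i (HC t i Hi)).
    pose proof (Heps i Hi). nra. }
  assert (step : forall t, (t < K)%nat ->
            INR K * (F (S t) - OPT) <= (INR K - 1) * (F t - OPT)).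
  { intros t Ht.
    destruct (Hgr t Ht) as [HjtN [Hjtnot Hmin]].
    set (jt := nth t js 0%nat) in *.
    set (C := firstn t js) in *.
    assert (HFS : F (S t) = gcost V eps p js t jt).
    { unfold F, gcost. apply rsum_ext. intros i Hi. unfold bstate.
      rewrite firstn_S_app by lia. rewrite prodl_app.
      fold C jt. unfold prodl at 2. simpl. ring. }
    set (G := F t - F (S t)).
    assert (HG0 : 0 <= G).
    { unfold G. rewrite HFS. unfold F, gcost. rewrite <- rsum_minus.
      replace 0 with (rsum V (fun _ => 0)) by (clear; induction V; simpl; [ring|rewrite IHV; ring]).
      apply rsum_le. intros i Hi. pose proof (Hb t i Hi). pose proof (Hp i jt Hi HjtN). nra. }
    set (T := filter (fun x => negb (inC C x)) S0).
    set (U := filter (inC C) S0).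
    assert (HT : forall j, In j T -> (j < N)%nat /\ ~ In j C).
    { intros j Hj. unfold T in Hj. apply filter_In in Hj. destruct Hj as [Hj Hn].
      split; auto. unfold inC in Hn. destruct (in_dec Nat.eq_dec j C); simpl in Hn; auto; discriminate. }
    assert (H1 : rsum V (fun i => bstate eps p js t i * prodl p T i) <= OPT).
    { rewrite <- SOPT. unfold setval. apply rsum_le. intros i Hi.
      rewrite (prodl_filter p (inC C) S0 i). fold U T. unfold bstate. fold C.
      assert (HU : prodl p C i <= prodl p U i).
      { apply prodl_incl.
        - apply NoDup_filter; auto.
        - intros x Hx. unfold U in Hx. apply filter_In in Hx. destruct Hx as [_ Hx].
          unfold inC in Hx. destruct (in_dec Nat.eq_dec x C); auto; discriminate.
        - apply HC; auto. }
      assert (HTb : 0 <= prodl p T i <= 1).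
      { apply prodl_bounds. intros j Hj. apply Hp; auto. apply HT; auto. }
      pose proof (prodl_bounds p C i (HC t i Hi)). pose proof (Heps i Hi).
      assert (eps i * prodl p C i <= prodl p U i) by nra.
      apply Rmult_le_compat_r; lra. }
    assert (H2 : F t - rsum V (fun i => bstate eps p js t i * prodl p T i) <= INR K * G).
    { unfold F at 1. rewrite <- rsum_minus.
      apply Rle_trans with (rsum V (fun i => lsum T (fun j => bstate eps p js t i * (1 - p i j)))).
      { apply rsum_le. intros i Hi. rewrite <- lsum_scal.
        pose proof (one_minus_prodl p T i (fun j Hj => Hp i j Hi (proj1 (HT j Hj)))).
        pose proof (Hb t i Hi). pose proof (Heps i Hi). nra. }
      rewrite rsum_lsum.
      apply Rle_trans with (INR (length T) * G).
      { apply lsum_bound. intros j Hj. destruct (HT j Hj) as [HjN HjC].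
        pose proof (Hmin j HjN HjC) as Hm. unfold G. rewrite HFS.
        replace (rsum V (fun i => bstate eps p js t i * (1 - p i j)))
          with (F t - gcost V eps p js t j).
        - lra.
        - unfold F, gcost. rewrite <- rsum_minus. apply rsum_ext. intros; ring. }
      apply Rmult_le_compat_r; auto. apply le_INR.
      rewrite <- Slen. apply filter_length_le. }
    unfold G in H2. lra. }
  set (q := 1 - 1 / INR K).
  assert (HKpos : 1 <= INR K) by (apply (le_INR 1); lia).
  assert (Hq0 : 0 <= q).
  { unfold q. assert (1 / INR K <= 1). { unfold Rdiv. rewrite Rmult_1_l.
      rewrite <- Rinv_1. apply Rinv_le_contravar; lra. } lra. }
  assert (Hiter : forall t, (t <= K)%nat -> F t - OPT <= q ^ t * (F 0%nat - OPT)).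
  { induction t; intros Ht; simpl pow; [lra|].
    pose proof (step t ltac:(lia)) as Hs. pose proof (IHt ltac:(lia)) as IH.
    assert (F (S t) - OPT <= q * (F t - OPT)).
    { unfold q. apply (Rmult_le_reg_l (INR K)); [lra|].
      replace (INR K * ((1 - 1 / INR K) * (F t - OPT))) with ((INR K - 1) * (F t - OPT))
        by (field; lra). lra. }
    assert (q * (F t - OPT) <= q * (q ^ t * (F 0%nat - OPT))) by (apply Rmult_le_compat_l; auto).
    lra. }
  assert (HF0 : F 0%nat = rsum V eps).
  { unfold F, bstate. apply rsum_ext. intros i Hi. simpl. unfold prodl; simpl. ring. }
  assert (HFK : F K <= rsum V eps). { unfold F. apply rsum_le. intros i Hi. apply Hb; auto. }
  assert (He1 : 1 < exp 1). { pose proof (exp_ineq1_le 1). lra. }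
  assert (Hexp : / exp 1 = exp (Ropp 1)) by (rewrite exp_Ropp; reflexivity).
  assert (Hinv : 0 < / exp 1 < 1).
  { split. apply Rinv_0_lt_compat; lra. apply (Rmult_lt_reg_l (exp 1)); [lra|]. rewrite Rinv_r; lra. }
  unfold Rdiv. rewrite Rmult_1_l.
  destruct (Rle_lt_dec (rsum V eps) OPT) as [Hle|Hlt].
  - nra.
  - assert (HqK : q ^ K <= / exp 1).
    { rewrite Hexp. replace (Ropp 1) with (INR K * (- (1 / INR K))) by (field; lra).
      rewrite <- exp_pow. apply pow_incr. split; auto.
      pose proof (exp_ineq1_le (- (1 / INR K))). unfold q. lra. }
    pose proof (Hiter K (le_n K)). rewrite HF0 in H.
    assert (q ^ K * (rsum V eps - OPT) <= / exp 1 * (rsum V eps - OPT))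
      by (apply Rmult_le_compat_r; lra).
    nra.
Qed.
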